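(* Fix a prompt $q$, constants $\beta>0$, $\varepsilon>0$, and assume $1-\rho^+(q)-\rho^-(q)>0$ and $0<p_{\mathrm{ref}}(q)<1$. Let $(\pi_k)_{k\ge0}$ be a sequence of policies such that, for each $k\ge1$, $\pi_k(\cdot\mid q)$ is the maximizer over all distributions $\pi(\cdot\mid q)$ on $\mathcal O$ of \[ \frac{(1-\rho^+(q)-\rho^-(q))\,\bigl(p_\pi(q)-p_{\pi_{k-1}}(q)\bigr)}{\sqrt{\mu_{\pi_{k-1}}(q)(1-\mu_{\pi_{k-1}}(q))+\varepsilon}}-\beta\,\mathrm{KL}\bigl(\pi(\cdot\mid q)\,\|\,\pi_{\mathrm{ref}}(\cdot\mid q)\bigr). \] Then for all $k\ge1$, $p_{\pi_k}(q)=\tilde h_{\varepsilon,\mathrm{ref}}(p_{\pi_{k-1}}(q))$, where \[ \tilde h_{\varepsilon,\mathrm{ref}}(p)=\frac{1}{1+\frac{1-p_{\mathrm{ref}}(q)}{p_{\mathrm{ref}}(q)}\exp\!\Bigl(-\frac{1-\rho^+(q)-\rho^-(q)}{\beta\sqrt{F(p)(1-F(p))+\varepsilon}}\Bigr)},\qquad F(p)=\rho^+(q)+(1-\rho^+(q)-\rho^-(q))\,p . \] Moreover, if in addition $\rho^+(q)+\rho^-(q)>0$, then $\tilde h_{\varepsilon,\mathrm{ref}}(p)<h_{\varepsilon,\mathrm{ref}}(p)$ for all $p\in[0,1]$, where \[ h_{\varepsilon,\mathrm{ref}}(p)=\frac{1}{1+\frac{1-p_{\mathrm{ref}}(q)}{p_{\mathrm{ref}}(q)}\exp\!\Bigl(-\frac{1}{\beta\sqrt{p(1-p)+\varepsilon}}\Bigr)}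 \] is the corresponding noiseless map; consequently the largest fixed point of $\tilde h_{\varepsilon,\mathrm{ref}}$ in $[0,1]$ is strictly smaller than the largest fixed point of $h_{\varepsilon,\mathrm{ref}}$ in $[0,1]$.
   Context: Setting: $\mathcal O$ is a countable set of responses; $r^*:\mathcal Q\times\mathcal O\to\{0,1\}$ is the true binary reward; a policy gives a distribution $\pi(\cdot\mid q)$ on $\mathcal O$; $p_\pi(q)=\mathbb E_{o\sim\pi(\cdot\mid q)}[r^*(q,o)]$. $\pi_{\mathrm{ref}}$ is a fixed reference policy and $p_{\mathrm{ref}}(q)=p_{\pi_{\mathrm{ref}}}(q)$. $\mathrm{KL}$ is the Kullback–Leibler divergence. Flip rates $\rho^+(q),\rho^-(q)\in[0,1]$ are the probabilities that a true reward $0$ is observed as $1$, respectively a true reward $1$ is observed as $0$. $\mu_{\pi}(q)=\rho^+(q)+(1-\rho^+(q)-\rho^-(q))\,p_{\pi}(q)$ is the mean observed (noisy) reward under $\pi$. *)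

(* Defs.v *)
From HB Require Import structures.
From mathcomp Require Import all_boot all_order all_algebra.
From mathcomp Require Import all_classical all_reals.
From mathcomp Require Import ereal sequences esum exp.
Set Implicit Arguments. Unset Strict Implicit. Unset Printing Implicit Defensive.
Import Order.TTheory GRing.Theory Num.Theory.
Local Open Scope classical_set_scope.
Local Open Scope ring_scope.

Section Defs.
Context {R : realType} {O : countType}.

Definition is_dist (pi : O -> R) : Prop :=
  (forall o, 0 <= pi o) /\ \esum_(o in [set: O]) (pi o)%:E = 1%E.

(* p_pi(q) = E_{o ~ pi(.|q)} [ r*(q,o) ], with r := r*(q, .) *)
Definition succ_prob (r : O -> bool) (pi : O -> R) : R :=
  fine (\esum_(o in [set: O]) ((r o)%:R * pi o)%:E).

Definition kl_term (a b : R) : \bar R :=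
  if a == 0 then 0%E else if b == 0 then +oo%E else (a * ln (a / b))%:E.

Definition KL (pi piref : O -> R) : \bar R :=
  (\esum_(o in [set: O]) maxe (kl_term (pi o) (piref o)) 0
   - \esum_(o in [set: O]) maxe (- kl_term (pi o) (piref o)) 0)%E.

(* mean of the observed noisy reward: rho+ + (1 - rho+ - rho-) p *)
Definition noisy_mean (rp rm p : R) : R := rp + (1 - rp - rm) * p.

Definition objective (rp rm beta eps : R) (r : O -> bool)
    (piref piprev pi : O -> R) : \bar R :=
  let mu := noisy_mean rp rm (succ_prob r piprev) in
  (((1 - rp - rm) * (succ_prob r pi - succ_prob r piprev)
      / Num.sqrt (mu * (1 - mu) + eps))%:E
   - beta%:E * KL pi piref)%E.

Definition is_maximizer (rp rm beta eps : R) (r : O -> bool)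
    (piref piprev pik : O -> R) : Prop :=
  is_dist pik /\
  forall pi, is_dist pi ->
    (objective rp rm beta eps r piref piprev pi
     <= objective rp rm beta eps r piref piprev pik)%E.

End Defs.

Definition htilde {R : realType} (pref rp rm beta eps p : R) : R :=
  let F := noisy_mean rp rm p in
  1 / (1 + (1 - pref) / pref
             * expR (- ((1 - rp - rm) / (beta * Num.sqrt (F * (1 - F) + eps))))).

Definition hmap {R : realType} (pref beta eps p : R) : R :=
  1 / (1 + (1 - pref) / pref
             * expR (- (1 / (beta * Num.sqrt (p * (1 - p) + eps))))).

Definition largest_fixed_point {R : realType} (f : R -> R) (a : R) : Prop :=
  [/\ 0 <= a <= 1, f a = a & forall x, 0 <= x <= 1 -> f x = x -> x <= a].

(* Main.v *)
Require Import Defs.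
From HB Require Import structures.
From mathcomp Require Import all_boot all_order all_algebra.
From mathcomp Require Import all_classical all_reals.
From mathcomp Require Import ereal sequences esum exp.
Import Order.TTheory GRing.Theory Num.Theory.
Local Open Scope classical_set_scope.
Local Open Scope ring_scope.
From mathcomp Require Import all_analysis.
From mathcomp Require Import ring lra.
Import Order.TTheory GRing.Theory Num.Theory.
Import numFieldNormedType.Exports.
Local Open Scope classical_set_scope.
Local Open Scope ring_scope.

Section P1.
Context {R : realType} {O : countType}.
Local Open Scope ereal_scope.

Lemma esumZ (k : R) (a : O -> \bar R) : (0 <= k)%R -> (forall o, 0 <= a o) ->
  \esum_(o in [set: O]) (k%:E * a o) = k%:E * \esum_(o in [set: O]) a o.
Proof.
move=> k0 a0; rewrite /esum -ereal_supZl//; last first.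
  apply/set0P; exists 0; exists set0; first exact: fsets_set0.
  by rewrite fsbig_set0.
rewrite image_comp; congr ereal_sup; apply: eq_imagel => A [finA _] /=.
rewrite !fsbig_finite// ge0_sume_distrr//.
Qed.

Lemma le_term_esum (a : O -> \bar R) t : (forall o, 0 <= a o) ->
  a t <= \esum_(o in [set: O]) a o.
Proof.
move=> a0; apply: esum_ge; exists [set t].
  by split; [exact: finite_set1|by []].
by rewrite fsbig_set1.
Qed.
End P1.

Section P2.
Context {R : realType} {O : countType}.

Lemma dist_split (r : O -> bool) (pi : O -> R) : is_dist pi ->
  let s := succ_prob r pi in
  [/\ (0 <= s <= 1)%R,
      \esum_(o in [set: O]) ((r o)%:R * pi o)%:E = s%:E &
      \esum_(o in [set: O]) ((~~ r o)%:R * pi o)%:E = (1 - s)%:E].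
Proof.
move=> [pi0 pi1] s.
have h0 : forall (b : bool) o, (0 <= (b%:R * pi o)%:E)%E.
  by move=> b o; rewrite lee_fin mulr_ge0.
have e : (\esum_(o in [set: O]) ((r o)%:R * pi o)%:E +
         \esum_(o in [set: O]) ((~~ r o)%:R * pi o)%:E = 1)%E.
  rewrite -esumD//; rewrite -pi1; apply: eq_esum => o _.
  by case: (r o) => /=; rewrite -EFinD ?mul1r ?mul0r ?addr0 ?add0r.
have X0 := esum_ge0 (S := setT) (fun o _ => h0 (r o) o).
have Y0 := esum_ge0 (S := setT) (fun o _ => h0 (~~ r o) o).
set X := esum _ _ in e X0 *; set Y := esum _ _ in e Y0 *.
have Xfin : X \is a fin_num.
  rewrite ge0_fin_numE ?X0//; have : (X <= 1)%E by rewrite -e leeDl ?Y0.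
  by move/le_lt_trans; apply; exact: ltry.
have Yfin : Y \is a fin_num.
  rewrite ge0_fin_numE ?Y0//; have : (Y <= 1)%E by rewrite -e leeDr ?X0.
  by move/le_lt_trans; apply; exact: ltry.
have sX : s%:E = X by rewrite /s /succ_prob fineK.
move: e X0 Y0; rewrite -sX -(fineK Yfin) -EFinD => /eqP; rewrite eqe => /eqP e.
rewrite !lee_fin => s0 y0; split => //.
- apply/andP; split => //; lra.
- congr (_%:E); lra.
Qed.

Lemma esum_lin (r : O -> bool) (pi : O -> R) (kA kB : R) : is_dist pi ->
  (0 <= kA)%R -> (0 <= kB)%R ->
  \esum_(o in [set: O]) ((if r o then kA else kB) * pi o)%:E
  = (kA * succ_prob r pi + kB * (1 - succ_prob r pi))%:E.
Proof.
move=> d kA0 kB0; have [_ e1 e2] := dist_split r _ d; have [pi0 _] := d.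
have h0 : forall (b : bool) o, (0 <= (b%:R * pi o)%:E)%E.
  by move=> b o; rewrite lee_fin mulr_ge0.
transitivity (\esum_(o in [set: O]) (kA%:E * ((r o)%:R * pi o)%:E +
                                      kB%:E * ((~~ r o)%:R * pi o)%:E))%E.
  apply: eq_esum => o _; rewrite -!EFinM -EFinD.
  by case: (r o) => /=; congr (_%:E); ring.
rewrite esumD; last 2 first.
- by move=> o _; rewrite mule_ge0.
- by move=> o _; rewrite mule_ge0.
by rewrite !esumZ// e1 e2 -!EFinM -EFinD.
Qed.
End P2.

Section P3.
Context {R : realType}.

Lemma ln_bound (u : R) : 0 < u -> 0 <= u - 1 - ln u /\ (u - 1 - ln u = 0 -> u = 1).
Proof.
move=> u0; split.
  have := expR_ge1Dx (ln u); rewrite lnK ?posrE//; lra.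
move=> h; apply/eqP; rewrite -ln_eq0//; apply/negPn/negP => /expR_gt1Dx.
rewrite lnK ?posrE//; lra.
Qed.

Lemma kl_pos_case (a b l : R) : 0 < a -> 0 < b -> 0 < l ->
  let g := a * ln (a / b) - ((1 + ln l) * a - l * b) in
  0 <= g /\ (g = 0 -> a = l * b).
Proof.
move=> a0 b0 l0 g; set u := l * b / a.
have u0 : 0 < u by rewrite /u divr_gt0 ?mulr_gt0.
have e : a / b = l / u by rewrite /u; field; rewrite ?gt_eqF// mulr_gt0.
have eg : g = a * (u - 1 - ln u).
  rewrite /g e ln_div ?posrE//.
  have : l * b = a * u by rewrite /u; field; rewrite gt_eqF.
  move=> ->; ring.
have [h1 h2] := ln_bound _ u0.
split; first by rewrite eg; apply: mulr_ge0 => //; exact: ltW.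
rewrite eg => /eqP; rewrite mulf_eq0 gt_eqF//= => /eqP /h2 u1.
have : l * b = u * a by rewrite /u; field; rewrite gt_eqF.
by rewrite u1 mul1r.
Qed.

Local Open Scope ereal_scope.

Lemma kl_lower (a b l : R) : (0 <= a)%R -> (0 <= b)%R -> (0 < l)%R ->
  ((1 + ln l) * a - l * b)%:E <= kl_term a b.
Proof.
move=> a0 b0 l0; rewrite /kl_term.
have [->|an0] := eqVneq a 0%R.
  by rewrite mulr0 add0r lee_fin oppr_le0; apply: mulr_ge0 => //; exact: ltW.
have [->|bn0] := eqVneq b 0%R; first by rewrite leey.
have a0' : (0 < a)%R by rewrite lt_neqAle eq_sym an0.
have b0' : (0 < b)%R by rewrite lt_neqAle eq_sym bn0.
have [h _] := kl_pos_case _ _ _ a0' b0' l0.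
by rewrite lee_fin -subr_ge0.
Qed.

Lemma kl_eq (a b l : R) : (0 <= a)%R -> (0 <= b)%R -> (0 < l)%R ->
  kl_term a b = ((1 + ln l) * a - l * b)%:E -> a = (l * b)%R.
Proof.
move=> a0 b0 l0; rewrite /kl_term.
have [->|an0] := eqVneq a 0%R.
  move=> /eqP; rewrite eqe mulr0 add0r eq_sym oppr_eq0 mulf_eq0 gt_eqF//=.
  by move=> /eqP ->; rewrite mulr0.
have [->|bn0] := eqVneq b 0%R; first by [].
have a0' : (0 < a)%R by rewrite lt_neqAle eq_sym an0.
have b0' : (0 < b)%R by rewrite lt_neqAle eq_sym bn0.
have [_ h] := kl_pos_case _ _ _ a0' b0' l0.
by move=> /eqP; rewrite eqe => /eqP e; apply: h; rewrite e subrr.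
Qed.

Lemma kl_exact (b l : R) : (0 <= b)%R -> (0 < l)%R ->
  kl_term (l * b) b = ((1 + ln l) * (l * b) - l * b)%:E.
Proof.
move=> b0 l0; rewrite /kl_term.
have [->|bn0] := eqVneq b 0%R; first by rewrite mulr0 eqxx mulr0 subrr.
rewrite mulf_eq0 (negbTE bn0) gt_eqF//= (mulfK bn0).
congr (_%:E); ring.
Qed.

Lemma kl_cases (a b : R) : kl_term a b = +oo \/ kl_term a b \is a fin_num.
Proof. rewrite /kl_term; case: ifP => _; [by right|case: ifP => _; by [left|right]]. Qed.
End P3.

Section P4.
Context {R : realType} {O : countType}.

Lemma max_diff (t : R) : Num.max t 0 - Num.max (- t) 0 = t.
Proof.
have [t0|t0] := boolP (0 <= t).
  rewrite (max_idPl t0) (max_idPr _); first by rewrite subr0.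
  by rewrite oppr_le0.
rewrite -ltNge in t0.
rewrite (max_idPr (ltW t0)) (max_idPl _) ?opprK ?sub0r.
  by rewrite add0r.
by rewrite oppr_ge0 ltW.
Qed.

Local Open Scope ereal_scope.

Lemma ealg {S G : \bar R} {n a1 a2 a3 : R} : 0 <= S -> 0 <= G ->
  S + a1%:E + a2%:E = n%:E + G + a3%:E -> S - n%:E = G + (a3 - a1 - a2)%:E.
Proof.
case: S => [s||] //; case: G => [g||] //= _ _.
move=> /eqP; rewrite -!EFinD eqe => /eqP e.
congr (_%:E); lra.
Qed.


Definition lam (r : O -> bool) (lA lB : R) o : R := if r o then lA else lB.
Definition Lt (r : O -> bool) (lA lB : R) (pi piref : O -> R) o : R :=
  ((1 + ln (lam r lA lB o)) * pi o - lam r lA lB o * piref o)%R.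
Definition gap r (lA lB : R) (pi piref : O -> R) o : \bar R :=
  kl_term (pi o) (piref o) - (Lt r lA lB pi piref o)%:E.

Lemma gap_ge0 r (lA lB : R) (pi piref : O -> R) o : (0 < lA)%R -> (0 < lB)%R ->
  (0 <= pi o)%R -> (0 <= piref o)%R -> 0 <= gap r lA lB pi piref o.
Proof.
move=> lA0 lB0 p0 q0.
by rewrite /gap sube_ge0 ?fin_numE//; apply: kl_lower => //; rewrite /lam; case: (r o).
Qed.

Lemma KL_decomp r (lA lB : R) (pi piref : O -> R) : (0 < lA)%R -> (0 < lB)%R ->
  is_dist pi -> is_dist piref ->
  KL pi piref = \esum_(o in [set: O]) gap r lA lB pi piref o +
    ((1 + ln lA) * succ_prob r pi + (1 + ln lB) * (1 - succ_prob r pi)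
     - (lA * succ_prob r piref + lB * (1 - succ_prob r piref)))%:E.
Proof.
move=> lA0 lB0 dp dq; have [p0 p1] := dp; have [q0 q1] := dq.
set aA := (1 + ln lA)%R; set aB := (1 + ln lB)%R.
set pA := Num.max aA 0%R; set pB := Num.max aB 0%R.
set nA := Num.max (- aA)%R 0%R; set nB := Num.max (- aB)%R 0%R.
set x := fun o => kl_term (pi o) (piref o).
have x0 : forall o, 0 <= maxe (x o) 0 by move=> o; rewrite le_max lexx orbT.
have xn0 : forall o, 0 <= maxe (- x o) 0 by move=> o; rewrite le_max lexx orbT.
have g0 : forall o, 0 <= gap r lA lB pi piref o by move=> o; apply: gap_ge0.
have lin0 : forall (kA kB : R) (f : O -> R), (0 <= kA)%R -> (0 <= kB)%R ->
    (forall o, 0 <= f o)%R -> forall o, 0 <= ((if r o then kA else kB) * f o)%:E.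
  by move=> kA kB f ? ? ? o; rewrite lee_fin; case: (r o); apply: mulr_ge0.
have pA0 : (0 <= pA)%R by rewrite le_max lexx orbT.
have pB0 : (0 <= pB)%R by rewrite le_max lexx orbT.
have nA0 : (0 <= nA)%R by rewrite le_max lexx orbT.
have nB0 : (0 <= nB)%R by rewrite le_max lexx orbT.
have pt : forall o, maxe (x o) 0 + ((if r o then nA else nB) * pi o)%:E
                     + ((if r o then lA else lB) * piref o)%:E
          = maxe (- x o) 0 + gap r lA lB pi piref o
                     + ((if r o then pA else pB) * pi o)%:E.
  move=> o; rewrite /gap /Lt /lam -/(x o).
  have := kl_cases (pi o) (piref o); rewrite -/(x o); case => [->|].
    by rewrite (max_idPl (leey _)) (max_idPr (leNye _)) /=.
  move=> /fineK <-; set y := fine (x o).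
  rewrite -EFinN -!EFin_max -!EFinB -!EFinD; congr (_%:E).
  have hy := max_diff y.
  have hA := max_diff aA; have hB := max_diff aB.
  rewrite -/pA -/nA -/pB -/nB in hA hB.
  have eA : (pA * pi o - nA * pi o = aA * pi o)%R by rewrite -mulrBl hA.
  have eB : (pB * pi o - nB * pi o = aB * pi o)%R by rewrite -mulrBl hB.
  by case: (r o); rewrite -/aA -/aB; lra.
have E := eq_esum (I := [set: O]) (fun o _ => pt o).
have lin := fun kA kB f df a b => esum_lin r f kA kB df a b.
rewrite esumD in E; last 2 first.
- by move=> o _; apply: adde_ge0 => //; apply: lin0.
- by move=> o _; apply: lin0 => //; exact: ltW.
rewrite esumD in E; last 2 first.
- by [].
- by move=> o _; apply: lin0.
rewrite esumD in E; last 2 first.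
- by move=> o _; apply: adde_ge0.
- by move=> o _; apply: lin0.
rewrite esumD in E; last 2 first.
- by [].
- by [].
rewrite !lin in E => //; try exact: ltW.
have Nb : \esum_(o in [set: O]) maxe (- x o) 0 \is a fin_num.
  rewrite ge0_fin_numE; last exact: esum_ge0.
  apply: (le_lt_trans _ (ltry 1%R)); rewrite -q1; apply: le_esum => o _.
  rewrite ge_max lee_fin q0 andbT.
  have := kl_lower _ _ 1%R (p0 o) (q0 o) ltr01.
  rewrite ln1 addr0 !mul1r -/(x o) => h.
  rewrite leeNl; apply: le_trans h; rewrite -EFinN lee_fin; have := p0 o; lra.
rewrite /KL -/x -(fineK Nb) in E *.
rewrite (ealg (esum_ge0 (fun o _ => x0 o)) (esum_ge0 (fun o _ => g0 o)) E).
congr (_ + _%:E).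
have hA := max_diff aA; have hB := max_diff aB.
rewrite -/pA -/nA -/pB -/nB in hA hB.
rewrite -hA -hB; ring.
Qed.

End P4.

Section P5.
Context {R : realType} {O : countType}.
Local Open Scope ereal_scope.

Lemma obj_form (c beta pp s K M : R) (G : \bar R) : 0 <= G -> (0 < beta)%R ->
  (beta * K = c * s - (c * pp + M))%R ->
  (c * (s - pp))%:E - beta%:E * (G + K%:E) = M%:E - beta%:E * G.
Proof.
case: G => [g||] //= _ b0 hK.
  rewrite -!EFinD; congr (_%:E).
  have -> : (beta * (g + K) = beta * g + beta * K)%R by rewrite mulrDr.
  rewrite hK; ring.
by rewrite addye// (muleC _ +oo) gt0_mulye ?lte_fin// /= !addeNy.
Qed.

Lemma step (rp rm beta eps : R) (r : O -> bool) (piref piprev pik : O -> R) :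
  (0 < beta)%R -> is_dist piref -> (0 < succ_prob r piref < 1)%R ->
  is_maximizer rp rm beta eps r piref piprev pik ->
  succ_prob r pik
  = htilde (succ_prob r piref) rp rm beta eps (succ_prob r piprev).
Proof.
move=> b0 dq /andP[P0 P1] [dk maxk].
set P := succ_prob r piref in P0 P1 *.
set pp := succ_prob r piprev.
set mu := noisy_mean rp rm pp.
set S := Num.sqrt (mu * (1 - mu) + eps).
set c := ((1 - rp - rm) / S)%R.
set e := expR (c / beta).
have e0 : (0 < e)%R by apply: expR_gt0.
set Z := (P * e + (1 - P))%R.
have Z0 : (0 < Z)%R by rewrite /Z; apply: addr_gt0; [exact: mulr_gt0|lra].
set lA := (e / Z)%R; set lB := (1 / Z)%R.
have lA0 : (0 < lA)%R by apply: divr_gt0.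
have lB0 : (0 < lB)%R by apply: divr_gt0.
have lnA : ln lA = (c / beta - ln Z)%R by rewrite /lA ln_div ?posrE// /e expRK.
have lnB : ln lB = (- ln Z)%R by rewrite /lB ln_div ?posrE// ln1 sub0r.
have sumAB : (lA * P + lB * (1 - P) = 1)%R.
  rewrite /lA /lB; move: Z0; rewrite /Z => Z0; field; by rewrite gt_eqF.
set g := fun o => (lam r lA lB o * piref o)%R.
have [q0 q1] := dq.
have dg : is_dist g.
  split; first by move=> o; rewrite /g /lam; case: (r o); apply: mulr_ge0 => //; exact: ltW.
  rewrite /g /lam; rewrite esum_lin //; try exact: ltW.
  by rewrite -/P sumAB.
have obj : forall pi, is_dist pi -> objective rp rm beta eps r piref piprev pi
   = (beta * ln Z - c * pp)%:E - beta%:E * \esum_(o in [set: O]) gap r lA lB pi piref o.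
  move=> pi dpi; rewrite /objective -/pp -/mu -/S (KL_decomp r lA lB pi piref lA0 lB0 dpi dq) -/P.
  rewrite (_ : ((1 - rp - rm) * (succ_prob r pi - pp) / S)%R = (c * (succ_prob r pi - pp))%R); last first.
    by rewrite /c; ring.
  apply: obj_form => //; first by apply: esum_ge0 => o _; apply: gap_ge0 => //; case: dpi.
  by rewrite sumAB lnA lnB; field; rewrite gt_eqF.
have Gg : \esum_(o in [set: O]) gap r lA lB g piref o = 0.
  apply: esum1 => o _; rewrite /gap /g /Lt kl_exact//; first by rewrite subee.
  by rewrite /lam; case: (r o).
have hk := maxk g dg; rewrite !obj// Gg mule0 sube0 in hk.
set G := esum _ _ in hk.
have G0 : 0 <= G by apply: esum_ge0 => o _; apply: gap_ge0 => //; case: dk.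
have GG : G = 0.
  move: hk G0; case: G => [x||] //=.
    rewrite -EFinD !lee_fin => h x0; congr (_%:E).
    apply/eqP; rewrite eq_le x0 andbT.
    have : (beta * x <= 0)%R by lra.
    by rewrite pmulr_rle0.
  by rewrite (muleC _ +oo) gt0_mulye ?lte_fin// /= addeNy leeNy_eq.
have [k0 _] := dk.
have pk : pik = g.
  apply/funext => o.
  have go : gap r lA lB pik piref o = 0.
    apply/eqP; rewrite eq_le gap_ge0// andbT -GG.
    by apply: le_term_esum => o'; apply: gap_ge0.
  have lo : (0 < lam r lA lB o)%R by rewrite /lam; case: (r o).
  rewrite /g; apply: (kl_eq _ _ _ (k0 o) (q0 o) lo).
  move: go; rewrite /gap; case: (kl_cases (pik o) (piref o)) => [->//|].
  move=> /fineK <-; rewrite -EFinB => /eqP; rewrite eqe subr_eq0 => /eqP ->.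
  by [].
rewrite pk.
have sg : succ_prob r g = (lA * P)%R.
  rewrite /succ_prob (eq_esum (b := fun o => ((if r o then lA else 0%R) * piref o)%:E)).
    by rewrite esum_lin //= ?mul0r ?addr0 //; exact: ltW.
  by move=> o _; rewrite /g /lam; case: (r o); rewrite ?mul1r ?mul0r.
rewrite sg /htilde -/mu -/S.
have ce : ((1 - rp - rm) / (beta * S) = c / beta)%R.
  rewrite /c; have [->|Sn0] := eqVneq S 0%R; first by rewrite mulr0 !invr0 !mulr0 mul0r.
  by field; rewrite Sn0 gt_eqF.
rewrite ce -/e expRN /lA; move: Z0 e0; rewrite /Z => Z0 e0'.
rewrite -/e; clearbody e.
field; by rewrite !gt_eqF.
Qed.

End P5.

Section P6.
Context {R : realType}.

Definition cont01 (f : R -> R) := forall x, 0 <= x <= 1 -> {for x, continuous f}.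

Lemma ivt_fix (f : R -> R) (a b : R) : cont01 f -> 0 <= a -> a <= b -> b <= 1 ->
  a <= f a -> f b <= b -> exists2 c, a <= c <= b & f c = c.
Proof.
move=> cf a0 ab b1 ha hb.
have ch : {within `[a, b], continuous (fun x => f x - x)}.
  apply: continuous_in_subspaceT => x; rewrite inE /= in_itv /= => /andP[ax xb].
  apply: continuousB; first by apply: cf; apply/andP; split; lra.
  exact: cvg_id.
have [|c] := IVT (v := 0) ab ch.
  rewrite ge_min le_max; apply/andP; split; apply/orP; [right|left]; lra.
by rewrite in_itv /= => cab /eqP; rewrite subr_eq0 => /eqP fc; exists c.
Qed.

Lemma lfp_exists (f : R -> R) : cont01 f -> (forall x, 0 <= x <= 1 -> 0 < f x < 1) ->
  exists a, largest_fixed_point f a.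
Proof.
move=> cf f01.
set S := [set x : R | 0 <= x <= 1 /\ f x = x].
have [c c01 fc] : exists2 c, 0 <= c <= 1 & f c = c.
  apply: (ivt_fix _ 0 1 cf) => //.
  - by have := f01 0; rewrite lexx ler01 => /(_ isT) /andP[h _]; lra.
  - by have := f01 1; rewrite lexx ler01 => /(_ isT) /andP[_ h]; lra.
have Sne : S !=set0 by exists c.
have Sub : ubound S 1 by move=> x [/andP[_ ?] _].
have hs : has_sup S by split => //; exists 1.
set a := sup S.
have aS : forall x, S x -> x <= a by move=> x Sx; apply: sup_upper_bound.
have a0 : 0 <= a by apply: le_trans (aS c _); [case/andP: c01|].
have a1 : a <= 1 by apply: ge_sup.
exists a; split; last 2 first.
- have a01 : 0 <= a <= 1 by rewrite a0 a1.
  apply/eqP; rewrite -subr_eq0; apply/eqP.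
  have [h|h|//] := ltgtP (f a - a) 0.
  + have ch : (fun x => f x - x) @ a --> f a - a.
      by apply: continuousB; [exact: cf|exact: cvg_id].
    have hn := cvgr_lt _ ch _ h; have [e e0 he] := (nbhs_ballP _ _).1 (hn _).
    have [s Ss se] := sup_adherent e0 hs.
    have sa := aS _ Ss.
    have : ball a e s.
      rewrite -/a in se; rewrite /ball /= ger0_norm ?subr_ge0//.
      by move: se; rewrite !ltrBlDr addrC.
    move/he => /=; case: Ss => _ ->; lra.
  + have a1' : a < 1.
      rewrite lt_neqAle a1 andbT; apply/eqP => ea.
      have := f01 _ a01; rewrite ea in h * => /andP[_ h2]; lra.
    have afa : a <= f a by lra.
    have f1 : f 1 <= 1 by have := f01 1; rewrite ler01 lexx => /(_ isT) /andP[_ ?]; lra.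
    have [c' /andP[ac' c'1] fc'] := ivt_fix _ _ _ cf a0 (ltW a1') (lexx 1) afa f1.
    have Sc' : S c' by split => //; rewrite c'1 (le_trans a0 ac').
    have ec : c' = a by apply/eqP; rewrite eq_le ac' aS.
    by move: h; rewrite -ec fc' subrr ltxx.
- by move=> x x01 fx; apply: aS.
- by rewrite a0 a1.
Qed.

Lemma lfp_lt (f g : R -> R) (a b : R) : cont01 g -> g 1 <= 1 ->
  (forall x, 0 <= x <= 1 -> f x < g x) ->
  largest_fixed_point f a -> largest_fixed_point g b -> a < b.
Proof.
move=> cg g1 fg [/andP[a0 a1] fa _] [_ _ gmax].
have ga : a < g a by rewrite -{1}fa; apply: fg; rewrite a0 a1.
have [c /andP[ac c1] gc] := ivt_fix _ _ _ cg a0 a1 (lexx 1) (ltW ga) g1.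
have cb : c <= b by apply: gmax => //; rewrite c1 (le_trans a0 ac).
apply: lt_le_trans cb; rewrite lt_neqAle ac andbT; apply/eqP => ac'.
by move: ga; rewrite ac' gc ltxx.
Qed.
End P6.

Section P7.
Context {R : realType}.

Lemma cont_phi (K a beta : R) (q : R -> R) (x : R) : 0 <= K -> 0 < beta -> 0 < q x ->
  {for x, continuous q} ->
  {for x, continuous (fun p => 1 / (1 + K * expR (- (a / (beta * Num.sqrt (q p))))))}.
Proof.
move=> K0 b0 qx cq.
have cs : {for x, continuous (fun p => Num.sqrt (q p))}.
  exact: (continuous_comp cq (@sqrt_continuous R _)).
have sx : 0 < Num.sqrt (q x) by rewrite sqrtr_gt0.
have cT : {for x, continuous (fun p => a / (beta * Num.sqrt (q p)))}.
  apply: continuousM; first exact: cvg_cst.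
  apply: continuousV; first by rewrite mulf_eq0 negb_or !gt_eqF.
  by apply: continuousM; [exact: cvg_cst|exact: cs].
have cE : {for x, continuous (fun p => expR (- (a / (beta * Num.sqrt (q p)))))}.
  apply: (continuous_comp (f := fun p => - (a / (beta * Num.sqrt (q p))))).
    exact: continuousN.
  exact: continuous_expR.
apply: continuousM; first exact: cvg_cst.
apply: continuousV.
  rewrite gt_eqF//; apply: (lt_le_trans ltr01); rewrite lerDl mulr_ge0 // ltW // expR_gt0.
apply: continuousD; first exact: cvg_cst.
by apply: continuousM; [exact: cvg_cst|exact: cE].
Qed.

Lemma phi01 (K t : R) : 0 < K -> 0 < 1 / (1 + K * expR (- t)) < 1.
Proof.
move=> K0; have e0 := expR_gt0 (- t).
have D1 : 1 < 1 + K * expR (- t) by rewrite ltrDl mulr_gt0.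
apply/andP; split; first by rewrite divr_gt0 // (lt_trans ltr01).
by rewrite ltr_pdivrMr ?mul1r // (lt_trans ltr01).
Qed.

Lemma phi_lt (K t1 t2 : R) : 0 < K -> t1 < t2 ->
  1 / (1 + K * expR (- t1)) < 1 / (1 + K * expR (- t2)).
Proof.
move=> K0 t12.
have e : expR (- t2) < expR (- t1) by rewrite ltr_expR ltrN2.
have e2 := expR_gt0 (- t2).
have D2 : 0 < 1 + K * expR (- t2) by rewrite addr_gt0 // mulr_gt0.
have D12 : 1 + K * expR (- t2) < 1 + K * expR (- t1) by rewrite ltrD2l ltr_pM2l.
rewrite !div1r ltf_pV2 ?posrE //; exact: lt_trans D12.
Qed.

Lemma part2 (P rp rm beta eps : R) : 0 < beta -> 0 < eps ->
  0 <= rp <= 1 -> 0 <= rm <= 1 -> 0 < 1 - rp - rm -> 0 < P < 1 ->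
  0 < rp + rm ->
  (forall p : R, 0 <= p <= 1 -> htilde P rp rm beta eps p < hmap P beta eps p) /\
  exists a b : R,
    [/\ largest_fixed_point (htilde P rp rm beta eps) a,
        largest_fixed_point (hmap P beta eps) b & a < b].
Proof.
move=> b0 e0 /andP[rp0 rp1] /andP[rm0 rm1] a0 /andP[P0 P1] s0.

have K0 : 0 < (1 - P) / P by rewrite divr_gt0 // subr_gt0.
have Fq : forall p, 0 <= p <= 1 ->
    0 <= noisy_mean rp rm p * (1 - noisy_mean rp rm p).
  move=> p /andP[p0 p1]; rewrite /noisy_mean.
  apply: mulr_ge0; nra.
have lt : forall p : R, 0 <= p <= 1 -> htilde P rp rm beta eps p < hmap P beta eps p.
  move=> p p01; rewrite /htilde /hmap /=; apply: phi_lt => //.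
  have := Fq p p01; set F := noisy_mean rp rm p => F0.
  have pq : 0 <= p * (1 - p) by case/andP: p01 => ? ?; nra.
  set u := Num.sqrt (p * (1 - p) + eps).
  set v := Num.sqrt (F * (1 - F) + eps).
  have u0 : 0 < u by rewrite sqrtr_gt0; lra.
  have v0 : 0 < v by rewrite sqrtr_gt0; lra.
  have u2 : u ^+ 2 = p * (1 - p) + eps by rewrite sqr_sqrtr //; lra.
  have v2 : v ^+ 2 = F * (1 - F) + eps by rewrite sqr_sqrtr //; lra.
  have key : F * (1 - F) - (1 - rp - rm) ^+ 2 * (p * (1 - p)) >= 0.
    rewrite /F /noisy_mean; case/andP: p01 => p0 p1.
    have h1 : 0 <= rp * rm by rewrite mulr_ge0.
    have h2 : 0 <= rp * ((1 - rp - rm) * (1 - p)) by rewrite mulr_ge0 // mulr_ge0 //; lra.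
    have h3 : 0 <= (1 - rp - rm) * p * rm by rewrite mulr_ge0 // mulr_ge0 //; lra.
    nra.
  have au : (1 - rp - rm) * u < v.
    have a1 : 1 - rp - rm < 1 by lra.
    have : ((1 - rp - rm) * u) ^+ 2 < v ^+ 2.
      have a2 : (1 - rp - rm) ^+ 2 < 1 by nra.
      have a2e : (1 - rp - rm) ^+ 2 * eps < eps.
        rewrite -subr_gt0 (_ : eps - _ = (1 - (1 - rp - rm) ^+ 2) * eps); last by ring.
        by apply: mulr_gt0; rewrite ?subr_gt0.
      rewrite exprMn u2 v2; lra.
    move=> h; nra.
  rewrite -subr_gt0 (_ : 1 / (beta * u) - (1 - rp - rm) / (beta * v) = (v - (1 - rp - rm) * u) / (beta * u * v)); last first.
    by field; rewrite !gt_eqF.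
  by apply: divr_gt0; rewrite ?subr_gt0 // !mulr_gt0.
have cF : forall x : R, {for x, continuous (fun p : R => rp + (1 - rp - rm) * p)}.
  move=> x; apply: continuousD; first exact: cvg_cst.
  by apply: continuousM; [exact: cvg_cst|exact: cvg_id].
have ch : cont01 (htilde P rp rm beta eps).
  move=> x x01.
  apply: (cont_phi _ _ _ (fun p => (rp + (1 - rp - rm) * p) * (1 - (rp + (1 - rp - rm) * p)) + eps) x) => //.
  - exact: ltW.
  - by have := Fq x x01; rewrite /noisy_mean; lra.
  - apply: continuousD; last exact: cvg_cst.
    apply: continuousM; first exact: cF.
    by apply: continuousB; [exact: cvg_cst|exact: cF].
have cm : cont01 (hmap P beta eps).
  move=> x x01.
  apply: (cont_phi _ _ _ (fun p => p * (1 - p) + eps) x) => //.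
  - exact: ltW.
  - by case/andP: x01 => ? ?; nra.
  - apply: continuousD; last exact: cvg_cst.
    apply: continuousM; first exact: cvg_id.
    by apply: continuousB; [exact: cvg_cst|exact: cvg_id].
have h01 : forall x, 0 <= x <= 1 -> 0 < htilde P rp rm beta eps x < 1.
  by move=> x _; rewrite /htilde; apply: phi01.
have m01 : forall x, 0 <= x <= 1 -> 0 < hmap P beta eps x < 1.
  by move=> x _; rewrite /hmap; apply: phi01.
split => //.
have [a ha] := lfp_exists _ ch h01.
have [b hb] := lfp_exists _ cm m01.
exists a, b; split => //.
apply: (lfp_lt _ _ _ _ cm _ lt ha hb).
by have := m01 1; rewrite ler01 lexx => /(_ isT) /andP[_ /ltW].
Qed.
End P7.


Theorem theorem4 (R : realType) (O : countType) (r : O -> bool)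
    (piref : O -> R) (rp rm beta eps : R) (pi : nat -> O -> R) :
  0 < beta -> 0 < eps ->
  0 <= rp <= 1 -> 0 <= rm <= 1 -> 0 < 1 - rp - rm ->
  is_dist piref ->
  0 < succ_prob r piref < 1 ->
  is_dist (pi 0%N) ->
  (forall k : nat, is_maximizer rp rm beta eps r piref (pi k) (pi k.+1)) ->
  (forall k : nat,
     succ_prob r (pi k.+1)
     = htilde (succ_prob r piref) rp rm beta eps (succ_prob r (pi k))) /\
  (0 < rp + rm ->
     (forall p : R, 0 <= p <= 1 ->
        htilde (succ_prob r piref) rp rm beta eps p
        < hmap (succ_prob r piref) beta eps p) /\
     exists a b : R,
       [/\ largest_fixed_point (htilde (succ_prob r piref) rp rm beta eps) a,
           largest_fixed_point (hmap (succ_prob r piref) beta eps) b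
         & a < b]).
Proof.
move=> b0 e0 rp01 rm01 a0 dq P01 d0 hmax; split.
  by move=> k; apply: step => //; exact: hmax.
by move=> s0; apply: part2.
Qed.
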